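(* Let $\gamma:\mathbb{Z}\to\mathbb{R}^3$ be a discrete curve whose vertices $\gamma_i$ all lie in a common affine plane $P\subset\mathbb{R}^3$. Let $i\in\mathbb{Z}$, and assume that the discrete curvature $\kappa_i$, the normal vector $N_i$ and the discrete torsion $\tau_i$ of $\gamma$ at $\gamma_i$ (defined in the context) are well defined. Then $\tau_i=0$. Consequently, whenever the discrete torsion of a planar discrete curve is defined, it vanishes at every vertex.
   Context: Quaternions: $\mathbb{H}=\{[r,v]: r\in\mathbb{R},\ v\in\mathbb{R}^3\}$ with $[r,v]+[s,w]=[r+s,v+w]$, $[r,v]\cdot[s,w]=[rs-\langle v,w\rangle,\ rw+sv+v\times w]$, conjugate $\overline{[r,v]}=[r,-v]$, norm $|q|=\sqrt{q\bar q}=\sqrt{r^2+\|v\|^2}$, inverse $q^{-1}=\bar q/|q|^2$. The imaginary part of $q=[r,v]$ is $\operatorname{Im} q=v$, and $\mathbb{R}^3$ is identified with the pure imaginary quaternions $\{[0,v]\}$. Every $q$ has a polar form $q=|q|[\cos\phi,\,u\sin\phi]$ with $\|u\|=1$, $\phi\in[0,\pi]$, and $\sqrt{q}:=\sqrt{|q|}[\cos\frac{\phi}{2},\,u\sin\frac{\phi}{2}]$ (used only for $q\notin\mathbb{R}_{\le 0}$). Cross-ratio: $\operatorname{cr}(a,b,c,d)=(a-b)(b-c)^{-1}(c-d)(d-a)^{-1}$. ''Diagonal point'': $f(a,b,c,d)=\big((b-a)(c-a)^{-1}\sqrt{\operatorname{cr}(c,a,b,d)}+1\big)^{-1}\big((b-a)(c-a)^{-1}\sqrt{\operatorname{cr}(c,a,b,d)}\,c+b\big)$.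 A discrete curve is a map $\gamma:\mathbb{Z}\to\mathbb{R}^3$, $i\mapsto\gamma_i$. For a vertex $\gamma_i$ define the inserting points $A_i=f(\gamma_{i+2},\gamma_{i-1},\gamma_i,\gamma_{i+1})$, $B_i=f(\gamma_{i-1},\gamma_i,\gamma_{i+1},\gamma_{i+2})$, $C_i=f(\gamma_i,\gamma_{i+1},\gamma_{i+2},\gamma_{i-1})$, $D_i=f(\gamma_{i+1},\gamma_{i+2},\gamma_{i-1},\gamma_i)$; these are pure imaginary, i.e. points of $\mathbb{R}^3$, and are concyclic. The osculating circle $k_i$ of $\gamma$ at $\gamma_i$ is the circle through $A_i,B_i,C_i,D_i$; the discrete curvature $\kappa_i$ is the inverse of its radius; the normal vector $N_i$ is the unit normal vector of $k_i$ at $B_i$ (the unit vector in the plane of $k_i$ along the radius through $B_i$). The discrete torsion at $\gamma_i$ is $\tau_i=-\dfrac{9\,\langle \operatorname{Im}\operatorname{cr}(\gamma_{i-1},\gamma_i,\gamma_{i+1},\gamma_{i+2}),\,N_i\rangle}{2\kappa_i\,\|\gamma_i-\gamma_{i+1}\|^2}.$ ''Well defined'' means that all inverses and square roots above exist (vertices $\gamma_{i-1},\dots,\gamma_{i+2}$ pairwise distinct, no relevant cross-ratio is a non-positive real), and that $A_i,B_i,C_i,D_i$ determine a circle of positive finite radius. *)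

(* Defs.v *)
From HB Require Import structures.
From mathcomp Require Import all_boot all_order all_algebra.
From mathcomp Require Import all_classical all_reals all_analysis.
Set Implicit Arguments.
Unset Strict Implicit.
Unset Printing Implicit Defensive.
Import Order.TTheory GRing.Theory Num.Theory.
Local Open Scope ring_scope.

Section Quaternions.
Variable R : realType.

Record vec3 := V3 { vx : R; vy : R; vz : R }.

Definition vadd (v w : vec3) := V3 (vx v + vx w) (vy v + vy w) (vz v + vz w).
Definition vopp (v : vec3) := V3 (- vx v) (- vy v) (- vz v).
Definition vsub (v w : vec3) := vadd v (vopp w).
Definition vscale (a : R) (v : vec3) := V3 (a * vx v) (a * vy v) (a * vz v).
Definition v0 := V3 0 0 0.
Definition dot (v w : vec3) : R := vx v * vx w + vy v * vy w + vz v * vz w.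
Definition cross (v w : vec3) : vec3 :=
  V3 (vy v * vz w - vz v * vy w)
     (vz v * vx w - vx v * vz w)
     (vx v * vy w - vy v * vx w).
Definition vnorm (v : vec3) : R := Num.sqrt (dot v v).

Record quat := Qt { qre : R; qim : vec3 }.

Definition qadd (p q : quat) := Qt (qre p + qre q) (vadd (qim p) (qim q)).
Definition qsub (p q : quat) := Qt (qre p - qre q) (vsub (qim p) (qim q)).
Definition qmul (p q : quat) :=
  Qt (qre p * qre q - dot (qim p) (qim q))
     (vadd (vadd (vscale (qre p) (qim q)) (vscale (qre q) (qim p)))
           (cross (qim p) (qim q))).
Definition qconj (q : quat) := Qt (qre q) (vopp (qim q)).
Definition qnorm (q : quat) : R := Num.sqrt (qre q ^+ 2 + dot (qim q) (qim q)).
Definition qscale (a : R) (q : quat) := Qt (a * qre q) (vscale a (qim q)).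
(* q^{-1} = conj q / |q|^2  (only used when q <> 0) *)
Definition qinv (q : quat) := qscale ((qnorm q ^+ 2)^-1) (qconj q).
Definition q1 := Qt 1 v0.
Definition pure (v : vec3) := Qt 0 v.

(* sqrt via the polar form q = |q| [cos phi, u sin phi], phi in [0, pi],
   u = Im q / ||Im q|| (u is irrelevant when Im q = 0, since then
   sin (phi/2) = 0 for q a positive real). *)
Definition qangle (q : quat) : R := acos (qre q / qnorm q).
Definition qaxis (q : quat) : vec3 := vscale ((vnorm (qim q))^-1) (qim q).
Definition qsqrt (q : quat) : quat :=
  qscale (Num.sqrt (qnorm q))
    (Qt (cos (qangle q / 2)) (vscale (sin (qangle q / 2)) (qaxis q))).

Definition nonpos_real (q : quat) : Prop := qim q = v0 /\ qre q <= 0.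

Definition cr (a b c d : quat) : quat :=
  qmul (qmul (qmul (qsub a b) (qinv (qsub b c))) (qsub c d)) (qinv (qsub d a)).

Definition fX (a b c d : quat) : quat :=
  qmul (qmul (qsub b a) (qinv (qsub c a))) (qsqrt (cr c a b d)).
Definition fdiag (a b c d : quat) : quat :=
  qmul (qinv (qadd (fX a b c d) q1)) (qadd (qmul (fX a b c d) c) b).

(* all inverses and square roots in f(a,b,c,d) exist *)
Definition fdiag_defined (a b c d : quat) : Prop :=
  [/\ c <> a, a <> b, d <> c, ~ nonpos_real (cr c a b d)
    & qadd (fX a b c d) q1 <> Qt 0 v0].

Definition all_in (P : vec3 -> Prop) (ps : seq vec3) : Prop :=
  foldr (fun x acc => P x /\ acc) True ps.

Fixpoint pairwise_distinct (ps : seq vec3) : Prop :=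
  if ps is x :: qs then all_in (fun y => x <> y) qs /\ pairwise_distinct qs
  else True.

Definition curve := int -> vec3.

Definition gq (g : curve) (j : int) : quat := pure (g j).

Definition ptA (g : curve) (i : int) : vec3 :=
  qim (fdiag (gq g (i + 2)) (gq g (i - 1)) (gq g i) (gq g (i + 1))).
Definition ptB (g : curve) (i : int) : vec3 :=
  qim (fdiag (gq g (i - 1)) (gq g i) (gq g (i + 1)) (gq g (i + 2))).
Definition ptC (g : curve) (i : int) : vec3 :=
  qim (fdiag (gq g i) (gq g (i + 1)) (gq g (i + 2)) (gq g (i - 1))).
Definition ptD (g : curve) (i : int) : vec3 :=
  qim (fdiag (gq g (i + 1)) (gq g (i + 2)) (gq g (i - 1)) (gq g i)).

(* All inverses and square roots in the definitions of A_i..D_i and of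
   cr(g_{i-1},g_i,g_{i+1},g_{i+2}) exist. *)
Definition inserting_defined (g : curve) (i : int) : Prop :=
  [/\ pairwise_distinct [:: g (i - 1); g i; g (i + 1); g (i + 2)],
      fdiag_defined (gq g (i + 2)) (gq g (i - 1)) (gq g i) (gq g (i + 1)),
      fdiag_defined (gq g (i - 1)) (gq g i) (gq g (i + 1)) (gq g (i + 2)),
      fdiag_defined (gq g i) (gq g (i + 1)) (gq g (i + 2)) (gq g (i - 1))
    & fdiag_defined (gq g (i + 1)) (gq g (i + 2)) (gq g (i - 1)) (gq g i)].

Definition collinear (ps : seq vec3) : Prop :=
  exists (p v : vec3), all_in (fun x => exists t : R, x = vadd p (vscale t v)) ps.

Definition in_affine_hull (c : vec3) (ps : seq vec3) : Prop :=
  exists ws : seq R, size ws = size ps /\ \sum_(w <- ws) w = 1 /\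
    c = foldr vadd v0 [seq vscale wp.1 wp.2 | wp <- zip ws ps].

(* (c, rho) is the circle through A_i, B_i, C_i, D_i: the points are not
   collinear (so they determine at most one circle), c lies in their plane,
   all points are at distance rho from c, and 0 < rho. *)
Definition osc_circle (g : curve) (i : int) (c : vec3) (rho : R) : Prop :=
  let ps := [:: ptA g i; ptB g i; ptC g i; ptD g i] in
  [/\ 0 < rho, ~ collinear ps, in_affine_hull c ps
    & all_in (fun x => vnorm (vsub x c) = rho) ps].

Definition curvature (rho : R) : R := rho^-1.
Definition normalN (g : curve) (i : int) (c : vec3) (rho : R) : vec3 :=
  vscale (rho^-1) (vsub c (ptB g i)).

Definition torsion (g : curve) (i : int) (c : vec3) (rho : R) : R :=
  - (9 * dot (qim (cr (gq g (i - 1)) (gq g i) (gq g (i + 1)) (gq g (i + 2))))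
             (normalN g i c rho))
  / (2 * curvature rho * vnorm (vsub (g i) (g (i + 1))) ^+ 2).

Definition planar (g : curve) : Prop :=
  exists (p n : vec3), n <> v0 /\ forall j : int, dot (vsub (g j) p) n = 0.

End Quaternions.

(* Main.v *)
Require Import Defs.
From mathcomp Require Import all_boot all_order all_algebra.
From mathcomp Require Import all_classical all_reals all_analysis.
From mathcomp Require Import ring lra.
Import Order.TTheory GRing.Theory Num.Theory.
Local Open Scope ring_scope.

Section H.
Variable R : realType.
Implicit Types (p q r t : quat R) (u v w n : vec3 R).

Ltac qdes := repeat match goal with
 | q : quat _ |- _ => destruct q as [? [? ? ?]]
 | v : vec3 _ |- _ => destruct v
 end.
Ltac qring := qdes; rewrite /qmul /qadd /qsub /q1 /qscale /qconj /vadd /vsub /vopp /vscale /cross /dot /v0 /=;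
  congr (Qt _ (V3 _ _ _)); simpl; ring.

Lemma qmulA p q r : qmul (qmul p q) r = qmul p (qmul q r).
Proof. qring. Qed.
Lemma qmulDr p q r : qmul p (qadd q r) = qadd (qmul p q) (qmul p r).
Proof. qring. Qed.
Lemma q1mul q : qmul (q1 R) q = q.
Proof. qring. Qed.
Lemma qsub_tr p q t : qsub (qadd p t) (qadd q t) = qsub p q.
Proof. qring. Qed.
Lemma qadd_sub p t : qadd (qsub p t) t = p.
Proof. qring. Qed.
Lemma rearr X c b t : qadd (qmul X (qadd c t)) (qadd b t) =
  qadd (qadd (qmul X c) b) (qmul (qadd X (q1 R)) t).
Proof. qring. Qed.

Ltac vring := rewrite /qmul /qadd /qsub /q1 /qscale /qconj /vadd /vsub /vopp /vscale /cross /dot /v0 /=;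
  congr (V3 _ _ _); simpl; ring.

Definition inC (n : vec3 R) (q : quat R) := exists s, qim q = vscale s n.
Definition inW (n : vec3 R) (q : quat R) := qre q = 0 /\ exists u, qim q = cross n u.

Lemma C_mul n p q : inC n p -> inC n q -> inC n (qmul p q).
Proof.
move=> [s Hs] [s' Hs']; exists (qre p * s' + qre q * s).
rewrite /qmul /= Hs Hs'; destruct n; vring.
Qed.
Lemma C_add n p q : inC n p -> inC n q -> inC n (qadd p q).
Proof. move=> [s Hs] [s' Hs']; exists (s + s'); rewrite /qadd /= Hs Hs'; destruct n; vring. Qed.
Lemma C_q1 n : inC n (q1 R).
Proof. exists 0; destruct n; vring. Qed.
Lemma C_inv n q : inC n q -> inC n (qinv q).
Proof. move=> [s Hs]; exists (- ((qnorm q ^+ 2)^-1 * s)); rewrite /qinv /qscale /qconj /= Hs; destruct n; vring. Qed.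
Lemma C_sqrt n q : inC n q -> inC n (qsqrt q).
Proof.
move=> [s Hs]; exists (Num.sqrt (qnorm q) * sin (qangle q / 2) * (vnorm (qim q))^-1 * s).
rewrite /qsqrt /qaxis /qscale /=. rewrite Hs; destruct n; vring.
Qed.
Lemma W_sub n p q : inW n p -> inW n q -> inW n (qsub p q).
Proof.
move=> [Hp [u Hu]] [Hq [v Hv]]; split; first by rewrite /= Hp Hq subr0.
exists (vsub u v); rewrite /qsub /= Hu Hv; destruct n, u, v; vring.
Qed.
Lemma W_add n p q : inW n p -> inW n q -> inW n (qadd p q).
Proof.
move=> [Hp [u Hu]] [Hq [v Hv]]; split; first by rewrite /= Hp Hq addr0.
exists (vadd u v); rewrite /qadd /= Hu Hv; destruct n, u, v; vring.
Qed.
Lemma W_inv n q : inW n q -> inW n (qinv q).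
Proof.
move=> [Hp [u Hu]]; split; first by rewrite /= Hp mulr0.
exists (vscale (- (qnorm q ^+ 2)^-1) u); rewrite /qinv /qscale /qconj /= Hu; destruct n, u; vring.
Qed.
Lemma WW_C n p q : inW n p -> inW n q -> inC n (qmul p q).
Proof.
move=> [Hp [u Hu]] [Hq [v Hv]]; exists (dot n (cross u v)).
rewrite /qmul /= Hp Hq Hu Hv; destruct n, u, v; vring.
Qed.
Lemma CW_W n p q : inC n p -> inW n q -> inW n (qmul p q).
Proof.
move=> [s Hs] [Hq [u Hu]]; split.
  rewrite /qmul /= Hs Hq Hu; destruct n, u; rewrite /dot /vscale /cross /=; ring.
exists (vadd (vscale (qre p) u) (vscale s (cross n u))).
rewrite /qmul /= Hs Hq Hu; destruct n, u; vring.
Qed.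

Lemma dot_nn_neq0 n : n <> v0 R -> dot n n != 0.
Proof.
case: n => x y z Hn; apply/eqP => H; apply: Hn; rewrite /dot /= in H.
have hx : x = 0 by nra.
have hy : y = 0 by nra.
have hz : z = 0 by nra.
by rewrite hx hy hz.
Qed.

Lemma plane_sub n (p a b : vec3 R) : n <> v0 R -> dot (vsub a p) n = 0 -> dot (vsub b p) n = 0 ->
  inW n (qsub (pure a) (pure b)).
Proof.
move=> Hn Ha Hb; split; first by rewrite /= subr0.
have Hd : dot (vsub a b) n = 0.
  have -> : dot (vsub a b) n = dot (vsub a p) n - dot (vsub b p) n.
    by destruct a, b, p, n; rewrite /dot /vsub /vadd /vopp /=; ring.
  by rewrite Ha Hb subr0.
exists (vscale (dot n n)^-1 (cross (vsub a b) n)); rewrite /=.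
move: Hd; set d := vsub a b => Hd.
have E : cross n (vscale (dot n n)^-1 (cross d n)) =
   vsub (vscale ((dot n n)^-1 * dot n n) d) (vscale ((dot n n)^-1 * dot d n) n).
  by destruct d, n; vring.
rewrite E Hd mulVf ?dot_nn_neq0 // mulr0.
by destruct d, n; vring.
Qed.

Lemma qinvK q : q <> Qt 0 (v0 R) -> qmul (qinv q) q = q1 R.
Proof.
case: q => r [x y z] Hq.
set N := r ^+ 2 + (x * x + y * y + z * z).
have HN0 : 0 <= N by rewrite /N; nra.
have HN : N != 0.
  apply/eqP => H; apply: Hq; rewrite /N in H.
  have hr : r = 0 by nra.
  have hx : x = 0 by nra.
  have hy : y = 0 by nra.
  have hz : z = 0 by nra.
  by rewrite hr hx hy hz.
have E : qnorm (Qt r (V3 x y z)) ^+ 2 = N by rewrite /qnorm sqr_sqrtr.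
rewrite /qinv E /qmul /qscale /qconj /q1 /vscale /vopp /vadd /dot /cross /v0 /=.
move: HN; rewrite /N => HN.
congr (Qt _ (V3 _ _ _)); field; exact HN.
Qed.

Lemma fX_tr a b c d t :
  fX (qadd a t) (qadd b t) (qadd c t) (qadd d t) = fX a b c d.
Proof. by rewrite /fX /cr !qsub_tr. Qed.

Lemma fdiag_tr a b c d t : qadd (fX a b c d) (q1 R) <> Qt 0 (v0 R) ->
  fdiag (qadd a t) (qadd b t) (qadd c t) (qadd d t) = qadd (fdiag a b c d) t.
Proof.
move=> H; rewrite /fdiag fX_tr rearr qmulDr -qmulA qinvK // q1mul.
by [].
Qed.

Lemma cr_C n a b c d : inW n (qsub a b) -> inW n (qsub b c) -> inW n (qsub c d) ->
  inW n (qsub d a) -> inC n (cr a b c d).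
Proof.
move=> h1 h2 h3 h4; rewrite /cr.
apply: WW_C; last exact: W_inv.
apply: CW_W => //; apply: WW_C => //; exact: W_inv.
Qed.

Lemma plane_fdiag n (p a b c d : vec3 R) : n <> v0 R ->
  dot (vsub a p) n = 0 -> dot (vsub b p) n = 0 -> dot (vsub c p) n = 0 ->
  dot (vsub d p) n = 0 ->
  qadd (fX (pure a) (pure b) (pure c) (pure d)) (q1 R) <> Qt 0 (v0 R) ->
  dot (vsub (qim (fdiag (pure a) (pure b) (pure c) (pure d))) p) n = 0.
Proof.
move=> Hn ha hb hc hd HX.
have hp : dot (vsub p p) n = 0 by destruct p, n; rewrite /dot /vsub /vadd /vopp /=; ring.
set t := pure p.
have E : fdiag (pure a) (pure b) (pure c) (pure d) =
  fdiag (qadd (qsub (pure a) t) t) (qadd (qsub (pure b) t) t)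
        (qadd (qsub (pure c) t) t) (qadd (qsub (pure d) t) t) by rewrite !qadd_sub.
have EX : fX (qsub (pure a) t) (qsub (pure b) t) (qsub (pure c) t) (qsub (pure d) t)
   = fX (pure a) (pure b) (pure c) (pure d) by rewrite -(fX_tr _ _ _ _ t) !qadd_sub.
rewrite E fdiag_tr ?EX //.
have hXC : inC n (fX (pure a) (pure b) (pure c) (pure d)).
  rewrite /fX; apply: C_mul; last apply: C_sqrt; last apply: cr_C; 
    try apply: plane_sub; try eassumption.
  apply: WW_C; last apply: W_inv; apply: plane_sub; eassumption.
have [_ [u Hu]] : inW n (fdiag (qsub (pure a) t) (qsub (pure b) t) (qsub (pure c) t) (qsub (pure d) t)).
  rewrite /fdiag EX; apply: CW_W.
    apply: C_inv; apply: C_add => //; exact: C_q1.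
  apply: W_add; last exact: plane_sub hb hp.
  apply: CW_W => //; exact: plane_sub hc hp.
rewrite (_ : qim (qadd _ t) = vadd (cross n u) p); last by rewrite -Hu.
destruct n, u, p; rewrite /dot /vsub /vadd /vopp /cross /=; ring.
Qed.

Lemma dot_lemma (s k : R) n (c b p : vec3 R) :
  dot (vscale s n) (vscale k (vsub c b)) = s * k * (dot (vsub c p) n - dot (vsub b p) n).
Proof. destruct n, c, b, p; rewrite /dot /vsub /vadd /vopp /vscale /=; ring. Qed.

Lemma hull_lemma (w1 w2 w3 w4 : R) n (A B C D p : vec3 R) :
  dot (vsub (vadd (vscale w1 A) (vadd (vscale w2 B) (vadd (vscale w3 C) (vadd (vscale w4 D) (v0 R))))) p) n
  = w1 * dot (vsub A p) n + w2 * dot (vsub B p) n + w3 * dot (vsub C p) n + w4 * dot (vsub D p) n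
    + (w1 + (w2 + (w3 + (w4 + 0))) - 1) * dot p n.
Proof. destruct n, A, B, C, D, p; rewrite /dot /vsub /vadd /vopp /vscale /v0 /=; ring. Qed.
End H.

Theorem mainTheorem1 (R : realType) (g : curve R) (i : int) (c : vec3 R) (rho : R) :
  planar g -> inserting_defined g i -> osc_circle g i c rho ->
  torsion g i c rho = 0.
Proof.
move=> [p [n [Hn Hpl]]] [_ dA dB dC dD] [_ _ [ws [Hsz [Hsum Hc]]] _].
case: dA => _ _ _ _ hA; case: dB => _ _ _ _ hB; case: dC => _ _ _ _ hC; case: dD => _ _ _ _ hD.
have pA : dot (vsub (ptA g i) p) n = 0 := @plane_fdiag R n p (g (i + 2)) (g (i - 1)) (g i) (g (i + 1)) Hn (Hpl _) (Hpl _) (Hpl _) (Hpl _) hA.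
have pB : dot (vsub (ptB g i) p) n = 0 := @plane_fdiag R n p (g (i - 1)) (g i) (g (i + 1)) (g (i + 2)) Hn (Hpl _) (Hpl _) (Hpl _) (Hpl _) hB.
have pC : dot (vsub (ptC g i) p) n = 0 := @plane_fdiag R n p (g i) (g (i + 1)) (g (i + 2)) (g (i - 1)) Hn (Hpl _) (Hpl _) (Hpl _) (Hpl _) hC.
have pD : dot (vsub (ptD g i) p) n = 0 := @plane_fdiag R n p (g (i + 1)) (g (i + 2)) (g (i - 1)) (g i) Hn (Hpl _) (Hpl _) (Hpl _) (Hpl _) hD.
have pc : dot (vsub c p) n = 0.
  move: Hsz Hsum Hc; case: ws => [|w1 [|w2 [|w3 [|w4 [|? ?]]]]] //=.
  move=> _.
  rewrite big_cons.
  rewrite !big_cons. rewrite big_nil. move=> Hsum. move=> ->.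
  by rewrite hull_lemma pA pB pC pD Hsum subrr mul0r !mulr0 !addr0.
have [s Hs] : @inC R n (cr (gq g (i - 1)) (gq g i) (gq g (i + 1)) (gq g (i + 2))).
  by apply: cr_C; apply: plane_sub.
rewrite /torsion /normalN Hs (@dot_lemma R s _ n c _ p) pc pB subrr !mulr0 oppr0 mul0r.
done.
Qed.
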